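(* Let $n\ge2$ and let $Z$ be the $n\times n$ Zielke matrix defined by $Z[i,j]=1$ if $1\le i\le n-1$ and $j>i$, $Z[n,1]=-1$, and all other entries $0$. Fix a blocking of $Z$ into $n_t$ diagonal blocks, each of size at least $2$, and let $0<\tau\le\tfrac12$. Apply the BEAM factorization with threshold $\tau$ to $Z$. Then the max-norm growth factor equals $$\max_{1\le k\le n_t}\frac{\|\widetilde A^{(k)}\|_{\max}}{\|Z\|_{\max}}=\tau^{1-n_t}.$$
   Context: BEAM factorization with threshold $\tau$ (block LU with additive modifications): set $\widetilde A^{(1)}=Z$. For $k=1,\dots,n_t$: compute an SVD $\widetilde A^{(k)}_{k,k}=U_k\Sigma_kV_k^T$; replace every singular value $\le\tau$ in $\Sigma_k$ by $\tau$, obtaining $\widetilde\Sigma_k$, and set $D_k=U_k\widetilde\Sigma_kV_k^T$ (the modified diagonal block, with factors $L_{kk}=U_k$, $R_{kk}=\widetilde\Sigma_kV_k^T$); then form $\widetilde A^{(k+1)}=\widetilde A^{(k)}_{k+1:n_t,k+1:n_t}-\widetilde A^{(k)}_{k+1:n_t,k}D_k^{-1}\widetilde A^{(k)}_{k,k+1:n_t}$. Blocks are defined by a strictly increasing list $[1=\mathcal{I}_1<\dots<\mathcal{I}_{n_t+1}=n+1]$ and the blocks of $\widetilde A^{(k)}$ are indexed $k,\dots,n_t$. $\|X\|_{\max}=\max_{i,j}|X[i,j]|$. *)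

(* Defs.v *)
From HB Require Import structures.
From mathcomp Require Import all_boot all_order all_algebra.
From mathcomp Require Import reals.
Set Implicit Arguments. Unset Strict Implicit. Unset Printing Implicit Defensive.
Import Order.TTheory GRing.Theory Num.Theory.
Local Open Scope ring_scope.

(* Conventions: indices are 0-based.  An n x n matrix (and every
   intermediate matrix A~(k) of the algorithm) is represented as a function
   nat -> nat -> R; only the entries with row/column index in the relevant
   range are meaningful.  The blocking [1 = I_1 < ... < I_{nt+1} = n+1] of
   the paper becomes a function I : nat -> nat with I 0 = 0, I nt = n, and
   block k (0-based, k < nt) is the index range [I k, I (k+1)). *)

Definition zielke {R : realType} (n : nat) (i j : nat) : R :=
  if ((i < n) && (j < n))%N then
    if (i <= n - 2)%N && (i < j)%N then 1
    else if ((i == n.-1) && (j == 0))%N then -1 else 0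
  else 0.

Definition maxnorm_from {R : realType} (lo n : nat) (A : nat -> nat -> R) : R :=
  \big[Num.max/0]_(lo <= i < n) \big[Num.max/0]_(lo <= j < n) `|A i j|.

Definition diag_block {R : realType} (I : nat -> nat) (k : nat)
  (A : nat -> nat -> R) : 'M[R]_(I k.+1 - I k) :=
  \matrix_(a, b) A (I k + a)%N (I k + b)%N.

Definition thresh {R : realType} (tau : R) m (s : 'rV[R]_m) : 'rV[R]_m :=
  \row_a (if s 0 a <= tau then tau else s 0 a).

(* One BEAM step at block k: A' is A~(k+1) computed from A = A~(k) using
   SOME singular value decomposition  A_kk = U diag(s) V^T  (U, V
   orthogonal, s >= 0), with D_k = U diag(thresh s) V^T. *)
Definition beam_step {R : realType} (tau : R) (n : nat) (I : nat -> nat)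
  (k : nat) (A A' : nat -> nat -> R) : Prop :=
  exists (U V : 'M[R]_(I k.+1 - I k)) (s : 'rV[R]_(I k.+1 - I k)),
    [/\ U^T *m U = 1%:M, V^T *m V = 1%:M,
        (forall a, 0 <= s 0 a),
        diag_block I k A = U *m diag_mx s *m V^T &
        let Dinv := invmx (U *m diag_mx (thresh tau s) *m V^T) in
        forall i j, A' i j =
          A i j - \sum_(a < I k.+1 - I k) \sum_(b < I k.+1 - I k)
                    A i (I k + a)%N * Dinv a b * A (I k + b)%N j].

(* A run of the BEAM factorization on Z: A 0 = Z and A (k+1) is obtained
   from A k by a BEAM step, for every k < nt.  (A k) is A~(k+1) of the
   paper, whose meaningful part is indexed by [I k, n). *)
Definition beam_run {R : realType} (tau : R) (n nt : nat) (I : nat -> nat)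
  (A : nat -> nat -> nat -> R) : Prop :=
  (forall i j, A 0%N i j = zielke n i j) /\
  (forall k, (k < nt)%N -> beam_step tau n I k (A k) (A k.+1)).

Definition growth {R : realType} (n nt : nat) (I : nat -> nat)
  (A : nat -> nat -> nat -> R) : R :=
  (\big[Num.max/0]_(k < nt) maxnorm_from (I k) n (A k)) /
    maxnorm_from 0 n (zielke n).

(* Main.v *)
Require Import Defs.
From HB Require Import structures.
From mathcomp Require Import all_boot all_order all_algebra.
From mathcomp Require Import reals.
From mathcomp Require Import ring lra zify.
Import Order.TTheory GRing.Theory Num.Theory.
Local Open Scope ring_scope.
Lemma quad_id {R : realType} (W : nat -> R) (M : nat) :
  4 * \sum_(0 <= k < M.+1) W k ^+ 2 - \sum_(0 <= k < M) (W k - W k.+1) ^+ 2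
   - 2 * W M ^+ 2
  = 2 * W 0%N ^+ 2 + \sum_(0 <= k < M) (W k + W k.+1) ^+ 2.
Proof.
elim: M => [|M IH].
  by rewrite big_nat1 !big_geq //; ring.
rewrite big_nat_recr //= [in X in _ - X - _]big_nat_recr //=
  [in RHS]big_nat_recr //=.
have -> : 2 * W 0%N ^+ 2 + (\sum_(0 <= i < M) (W i + W i.+1) ^+ 2 +
   (W M + W M.+1) ^+ 2) =
   (2 * W 0%N ^+ 2 + \sum_(0 <= i < M) (W i + W i.+1) ^+ 2) +
   (W M + W M.+1) ^+ 2 by ring.
rewrite -IH; ring.
Qed.

Lemma sum_ge0_eq0 {R : realType} (F : nat -> R) (a b : nat) :
  (forall k, 0 <= F k) -> \sum_(a <= k < b) F k = 0 ->
  forall k, (a <= k < b)%N -> F k = 0.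
Proof.
move=> F0 S0 k kab.
have := psumr_eq0 (index_iota a b) (P := xpredT) (fun i _ => F0 i).
rewrite S0 eqxx => /esym /allP /(_ k); rewrite mem_index_iota kab /=.
by move=> /(_ isT) /eqP.
Qed.

Lemma lemL {R : realType} (m : nat) (f : nat -> R) :
  f 0%N = 0 ->
  4 * \sum_(0 <= r < m) (\sum_(r.+1 <= b < m) f b) ^+ 2 <=
     \sum_(0 <= b < m) f b ^+ 2 ->
  forall b, (b < m)%N -> f b = 0.
Proof.
move=> f0 H.
case: m H => [|m] H b bm; first by [].
pose W k := \sum_(k.+1 <= b < m.+1) f b.
have fW : forall k, (k < m)%N -> f k.+1 = W k - W k.+1.
  move=> k km; rewrite /W (big_ltn (m := k.+1)) //; ring.
have Wm : W m = 0 by rewrite /W big_geq.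
have sf : \sum_(0 <= b < m.+1) f b ^+ 2 = \sum_(0 <= k < m) (W k - W k.+1) ^+ 2.
  rewrite big_ltn // f0 expr0n /= add0r big_add1 /=.
  by apply: eq_big_nat => k /andP[_ km]; rewrite fW.
have := quad_id W m; rewrite Wm -sf.
move: H; rewrite -/W => H E.
have S0 : 0 <= \sum_(0 <= k < m) (W k + W k.+1) ^+ 2 by apply: sumr_ge0 => k _; exact: sqr_ge0.
have W00 : 0 <= W 0%N ^+ 2 by exact: sqr_ge0.
have HW0 : W 0%N ^+ 2 = 0 by nra.
have HS : \sum_(0 <= k < m) (W k + W k.+1) ^+ 2 = 0 by nra.
have Wz : forall k, (k <= m)%N -> W k = 0.
  elim=> [_|k IH km]; first by move/eqP: HW0; rewrite expf_eq0 /= => /eqP.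
  have := @sum_ge0_eq0 R (fun k => (W k + W k.+1)^+2) 0 m (fun k => sqr_ge0 _) HS k.
  rewrite /= km => /(_ isT) /eqP; rewrite expf_eq0 /= IH ?(ltnW km) // add0r.
  by move/eqP.
case: b bm => [|b] bm; first by [].
by rewrite fW // !Wz // ?subr0 // ltnW.
Qed.
Lemma sum_gt {R : realType} (m r : nat) (g : nat -> R) :
  \sum_(b < m) ((r < b)%N)%:R * g b = \sum_(r.+1 <= b < m) g b.
Proof.
rewrite -(big_mkord xpredT (fun b => ((r < b)%N)%:R * g b)).
case: (leqP r.+1 m) => rm.
  rewrite (big_cat_nat _ (n := r.+1)) //= big1_seq ?add0r.
    by apply: eq_big_nat => b /andP[rb _]; rewrite rb mul1r.
  move=> b /andP[_]; rewrite mem_index_iota => /andP[_ br].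
  by rewrite ltnNge -ltnS br mul0r.
rewrite [RHS]big_geq ?(ltnW rm) // big1_seq // => b /andP[_].
rewrite mem_index_iota => /andP[_ bm].
by rewrite ltnNge (leq_trans (ltnW bm) _) ?mul0r // -ltnS.
Qed.

Lemma sum_lt {R : realType} (m b : nat) (g : nat -> R) : (b <= m)%N ->
  \sum_(r < m) ((r < b)%N)%:R * g r = \sum_(0 <= r < b) g r.
Proof.
move=> bm.
rewrite -(big_mkord xpredT (fun r => ((r < b)%N)%:R * g r)).
rewrite (big_cat_nat _ (n := b)) //= [X in _ + X]big1_seq ?addr0.
  by apply: eq_big_nat => r /andP[_ rb]; rewrite rb mul1r.
move=> r /andP[_]; rewrite mem_index_iota => /andP[br _].
by rewrite ltnNge br mul0r.
Qed.

Lemma null_right {R : realType} (m : nat) (f : nat -> R) :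
  (forall r, (r < m)%N -> \sum_(r.+1 <= b < m) f b = 0) ->
  forall b, (0 < b < m)%N -> f b = 0.
Proof.
move=> H [|b] // /andP[_ bm].
by have := H b (ltnW bm); rewrite (big_ltn (m := b.+1)) // H // addr0.
Qed.

Lemma null_left {R : realType} (m : nat) (w : nat -> R) :
  (forall b, (b < m)%N -> \sum_(0 <= r < b) w r = 0) ->
  forall r, (r.+1 < m)%N -> w r = 0.
Proof.
move=> H r rm.
by have := H r.+1 rm; rewrite big_nat_recr //= H ?add0r // ltnW.
Qed.
Lemma sum_ord_nat {R : realType} (m : nat) (F : 'I_m.+1 -> R) :
  \sum_(b < m.+1) F b = \sum_(0 <= k < m.+1) F (inord k).
Proof. by rewrite big_mkord; apply: eq_bigr => b _; rewrite inord_val. Qed.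

Lemma XE {R : realType} m (U V : 'M[R]_m) (s : 'rV[R]_m) a b :
  (U *m diag_mx s *m V^T) a b = \sum_i U a i * s 0 i * V b i.
Proof. by rewrite mxE; apply: eq_bigr => i _; rewrite mul_mx_diag !mxE. Qed.

Lemma sum_delta {R : realType} m (F : 'I_m -> R) (j0 : 'I_m) (c : R) :
  \sum_j F j * (if j == j0 then c else 0) = F j0 * c.
Proof.
rewrite (bigD1 j0) //= eqxx big1 ?addr0 // => j /negPf ->; by rewrite mulr0.
Qed.

Lemma BL2 {R : realType} (m' : nat) (U V : 'M[R]_m'.+2) (s : 'rV[R]_m'.+2)
  (tau : R) :
  0 < tau -> tau <= 1 / 2 -> U^T *m U = 1%:M -> V^T *m V = 1%:M ->
  (forall a, 0 <= s 0 a) ->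
  (forall a b : 'I_m'.+2, (U *m diag_mx s *m V^T) a b = ((a < b)%N)%:R) ->
  exists beta : R, `|beta| = tau^-1 /\ forall a : 'I_m'.+2,
    \sum_(b < m'.+2) invmx (U *m diag_mx (thresh tau s) *m V^T) a b =
    (if a == ord0 then beta else 0) + (if a == ord_max then 1 else 0).
Proof.
move=> tau0 tau12 UU VV s0 HX.
set M := m'.+2.
have VVt : V *m V^T = 1%:M by apply: mulmx1C.
have UUt : U *m U^T = 1%:M by apply: mulmx1C.
have UtX : forall i b : 'I_M, \sum_(r < M) U r i * ((r < b)%N)%:R = s 0 i * V b i.
  move=> i b.
  have E : (U^T *m (U *m diag_mx s *m V^T)) i b = (diag_mx s *m V^T) i b.
    by rewrite !mulmxA UU mul1mx.
  under eq_bigr do rewrite -HX.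
  set X := U *m diag_mx s *m V^T in E *.
  by move: E; rewrite mul_diag_mx !mxE => <-; apply: eq_bigr => r _; rewrite [U^T _ _]mxE.
have XV : forall (r i : 'I_M), \sum_(b < M) ((r < b)%N)%:R * V b i = U r i * s 0 i.
  move=> r i.
  have E : ((U *m diag_mx s *m V^T) *m V) r i = (U *m diag_mx s) r i.
    by rewrite -mulmxA VV mulmx1.
  under eq_bigr do rewrite -HX.
  set X := U *m diag_mx s *m V^T in E *.
  by move: E; rewrite mul_mx_diag !mxE => <-.
have fact1 : forall i, s 0 i * V ord0 i = 0.
  move=> i; rewrite -UtX big1 // => r _; by rewrite mulr0.
have Unorm : forall i : 'I_M, \sum_r U r i ^+ 2 = 1.
  move=> i; transitivity ((U^T *m U) i i); last by rewrite UU mxE eqxx.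
  by rewrite mxE; apply: eq_bigr => r _; rewrite mxE expr2.
have Vnorm : forall i : 'I_M, \sum_r V r i ^+ 2 = 1.
  move=> i; transitivity ((V^T *m V) i i); last by rewrite VV mxE eqxx.
  by rewrite mxE; apply: eq_bigr => r _; rewrite mxE expr2.
have claimA : forall i, s 0 i <= tau -> s 0 i = 0 /\ V ord_max i = 0.
  move=> i sit.
  pose f k := V (inord k) i.
  have Nf : forall r, (r < M)%N -> \sum_(r.+1 <= b < M) f b = U (inord r) i * s 0 i.
    move=> r rM; rewrite -XV -sum_gt; apply: eq_bigr => b _.
    by rewrite /f inord_val inordK.
  have [si0|sipos] := eqVneq (s 0 i) 0.
    split=> //.
    have Nf0 : forall r, (r < M)%N -> \sum_(r.+1 <= b < M) f b = 0.
      by move=> r rM; rewrite Nf // si0 mulr0.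
    rewrite (_ : ord_max = inord m'.+1); last by apply: val_inj; rewrite /= inordK.
    have := @null_right R M f Nf0 m'.+1; rewrite /f; apply.
    by rewrite /M ltnSn.
  exfalso.
  have f0 : f 0%N = 0.
    have := fact1 i; rewrite /f (_ : inord 0 = ord0); last by apply: val_inj; rewrite /= inordK.
    by move/eqP; rewrite mulf_eq0 (negPf sipos) /= => /eqP.
  have H : 4 * \sum_(0 <= r < M) (\sum_(r.+1 <= b < M) f b) ^+ 2 <=
     \sum_(0 <= b < M) f b ^+ 2.
    have -> : \sum_(0 <= r < M) (\sum_(r.+1 <= b < M) f b) ^+ 2 =
       \sum_(0 <= r < M) (U (inord r) i * s 0 i) ^+ 2.
      by apply: eq_big_nat => r /andP[_ rM]; rewrite Nf.
    rewrite -(@sum_ord_nat _ m'.+1 (fun r => (U r i * s 0 i) ^+ 2)).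
    rewrite -(@sum_ord_nat _ m'.+1 (fun b => V b i ^+ 2)) Vnorm.
    under eq_bigr do rewrite exprMn.
    rewrite -mulr_suml Unorm mul1r.
    have := s0 i; nra.
  have := @lemL R M f f0 H.
  move=> fz; have := Vnorm i; rewrite sum_ord_nat big1_seq.
    by move/esym/eqP; rewrite oner_eq0.
  by move=> b /andP[_]; rewrite mem_index_iota => /andP[_ bM]; have := fz b bM; rewrite /f => ->; by rewrite expr0n.

set X0 := U *m V^T.
have wnorm : \sum_(r < M) X0 r ord0 ^+ 2 = 1.
  transitivity ((X0^T *m X0) ord0 ord0).
    by rewrite [RHS]mxE; apply: eq_bigr => r _; rewrite [X0^T _ _]mxE expr2.
  have -> : X0^T *m X0 = 1%:M.
    by rewrite /X0 trmx_mul trmxK !mulmxA -(mulmxA V) UU mulmx1 VVt.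
  by rewrite mxE eqxx.
have Nt : forall b : 'I_M, \sum_(r < M) ((r < b)%N)%:R * X0 r ord0 = 0.
  move=> b.
  have E : (U *m diag_mx s *m V^T)^T *m X0 = V *m diag_mx s *m V^T.
    rewrite /X0 !trmx_mul trmxK tr_diag_mx !mulmxA.
    by rewrite -(mulmxA (V *m diag_mx s)) UU mulmx1.
  have := congr1 (fun A : 'M_M => A b ord0) E; rewrite XE mxE => E2.
  transitivity (\sum_(i < M) V b i * (s 0 i * V ord0 i)); last first.
    by apply: big1 => i _; rewrite fact1 mulr0.
  under [RHS]eq_bigr do rewrite mulrA.
  rewrite -E2; apply: eq_bigr => r _; by rewrite [(_ ^T) b r]mxE HX.
have wz : forall r : 'I_M, (r < m'.+1)%N -> X0 r ord0 = 0.
  move=> r rm.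
  pose g k := X0 (inord k) ord0.
  have Hg : forall b, (b < M)%N -> \sum_(0 <= r < b) g r = 0.
    move=> b bM; rewrite -(@sum_lt R M b g (ltnW bM)) -[RHS](Nt (inord b)).
    apply: eq_bigr => k _; by rewrite /g inord_val inordK.
  have := @null_left R M g Hg r; rewrite /g inord_val; apply.
  by rewrite /M ltnS.
have wmax : X0 ord_max ord0 ^+ 2 = 1.
  rewrite -wnorm big_ord_recr /= big1 ?add0r // => r _.
  by rewrite wz ?expr0n //=.
have wn : `|X0 ord_max ord0| = 1.
  have h : `|X0 ord_max ord0| ^+ 2 = 1 by rewrite real_normK ?num_real.
  have := normr_ge0 (X0 ord_max ord0); nra.
have wne0 : X0 ord_max ord0 != 0.
  by apply/eqP => h; move: wn; rewrite h normr0 => /eqP; rewrite eq_sym oner_eq0.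
set beta := (tau * X0 ord_max ord0)^-1.
exists beta; split.
  rewrite /beta normrV; last by rewrite unitfE mulf_neq0 // gt_eqF.
  by rewrite normrM wn mulr1 gtr0_norm.
set t := thresh tau s.
have tpos : forall i, 0 < t 0 i.
  move=> i; rewrite /t /thresh mxE; case: ifP => // /negbT; rewrite -ltNge.
  exact: lt_trans.
set D := U *m diag_mx t *m V^T.
have Dunit : D \in unitmx.
  have : D *m (V *m diag_mx (\row_i (t 0 i)^-1) *m U^T) = 1%:M.
    rewrite /D !mulmxA -(mulmxA (U *m diag_mx t)) VV mulmx1.
    rewrite -(mulmxA U) mulmx_diag.
    have -> : \row_j (t 0 j * (\row_i (t 0 i)^-1) 0 j) = const_mx 1.
      apply/matrixP => a b; rewrite !mxE mulfV //; by move: (tpos b); rewrite /t /thresh mxE => /gt_eqF ->.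
    by rewrite diag_const_mx mulmx1 UUt.
  by case/mulmx1_unit.
pose y : 'cV[R]_M := \col_j ((if j == ord0 then beta else 0) +
                              (if j == ord_max then 1 else 0)).
have tz : forall i, t 0 i * (beta * V ord0 i + V ord_max i) =
                    tau * beta * V ord0 i + s 0 i * V ord_max i.
  move=> i; rewrite /t /thresh mxE; case: ifP => h.
    by have [-> ->] := claimA i h; ring.
  have sp : s 0 i != 0.
    apply/eqP => e; move/negbT: h; rewrite e -ltNge => h; by move: (lt_trans h tau0); rewrite ltxx.
  have : V ord0 i = 0.
    by have /eqP := fact1 i; rewrite mulf_eq0 (negPf sp) /= => /eqP.
  move=> ->; ring.
have Dy : D *m y = const_mx 1.
  apply/matrixP => r c; rewrite [RHS]mxE.
  rewrite /D -!mulmxA.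
  have Vy : forall i, (V^T *m y) i 0 = beta * V ord0 i + V ord_max i.
    move=> i; rewrite mxE.
    transitivity (\sum_j (V j i * (if j == ord0 then beta else 0)) +
                  \sum_j (V j i * (if j == ord_max then 1 else 0))).
      by rewrite -big_split; apply: eq_bigr => j _; rewrite !mxE mulrDr.
    by rewrite !sum_delta mulr1 mulrC.
  rewrite mxE.
  transitivity (\sum_i U r i * (tau * beta * V ord0 i + s 0 i * V ord_max i)).
    apply: eq_bigr => i _; rewrite (ord1 c); congr (_ * _).
    by rewrite mul_diag_mx mxE Vy tz.
  under eq_bigr do rewrite mulrDr.
  rewrite big_split /=.
  have -> : \sum_i U r i * (tau * beta * V ord0 i) = tau * beta * X0 r ord0.
    rewrite /X0 mxE mulr_sumr; apply: eq_bigr => i _; rewrite mxE; ring.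
  have -> : \sum_i U r i * (s 0 i * V ord_max i) = ((r < @ord_max m'.+1)%N)%:R.
    rewrite -HX XE; apply: eq_bigr => i _; ring.
  have [->|rne] := eqVneq r ord_max.
    by rewrite ltnn addr0 /beta mulrAC mulfV // mulf_neq0 // gt_eqF.
  have rm : (r < m'.+1)%N.
    move: rne; rewrite -val_eqE /= => /negPf rne.
    by have := ltn_ord r; rewrite ltnS leq_eqVlt rne.
  by rewrite wz // mulr0 add0r rm.
move=> a.
transitivity ((invmx D *m (const_mx 1 : 'cV[R]_M)) a 0).
  by rewrite mxE; apply: eq_bigr => b _; rewrite mxE mulr1.
by rewrite -Dy mulKmx // mxE.
Qed.
Lemma bigmax_ub {R : realType} (lo hi : nat) (F : nat -> R) (M : R) :
  0 <= M -> (forall i, (lo <= i < hi)%N -> F i <= M) ->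
  \big[Num.max/0]_(lo <= i < hi) F i <= M.
Proof.
move=> M0 H; rewrite big_seq; apply: bigmax_le => // i.
by rewrite mem_index_iota; apply: H.
Qed.

Lemma bigmax_lb {R : realType} (lo hi : nat) (F : nat -> R) (i : nat) :
  (lo <= i < hi)%N -> F i <= \big[Num.max/0]_(lo <= i < hi) F i.
Proof.
move=> H; apply: (le_bigmax_seq _ i xpredT) => //.
by rewrite mem_index_iota.
Qed.

Lemma expr_mono {R : realType} (x : R) (a b : nat) : 1 <= x -> (a <= b)%N ->
  x ^+ a <= x ^+ b.
Proof.
move=> x1 ab; rewrite -(subnKC ab) exprD.
rewrite ler_peMr ?exprn_ege1 // exprn_ge0 //; exact: le_trans x1.
Qed.

Lemma sum_ind {R : realType} (m k : nat) (c : R) : (k < m)%N ->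
  \sum_(a < m) (if (a == k :> nat) then c else 0) = c.
Proof.
move=> km; rewrite (bigD1 (Ordinal km)) //= eqxx big1 ?addr0 // => j.
by rewrite -val_eqE /= => /negPf ->.
Qed.

Lemma BLgen {R : realType} (m : nat) (U V : 'M[R]_m) (s : 'rV[R]_m)
  (tau : R) : (1 < m)%N ->
  0 < tau -> tau <= 1 / 2 -> U^T *m U = 1%:M -> V^T *m V = 1%:M ->
  (forall a, 0 <= s 0 a) ->
  (forall a b : 'I_m, (U *m diag_mx s *m V^T) a b = ((a < b)%N)%:R) ->
  exists beta : R, `|beta| = tau^-1 /\ forall a : 'I_m,
    \sum_(b < m) invmx (U *m diag_mx (thresh tau s) *m V^T) a b =
    (if (a == 0 :> nat) then beta else 0) + (if (a == m.-1 :> nat) then 1 else 0).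
Proof.
case: m U V s => [|[|m']] // U V s _ tau0 tau12 UU VV s0 HX.
have [beta [Hb Hs]] := @BL2 R m' U V s tau tau0 tau12 UU VV s0 HX.
by exists beta; split.
Qed.
Lemma zielke_le1 {R : realType} n i j : `|@zielke R n i j| <= 1.
Proof.
rewrite /zielke; case: ifP => _; last by rewrite normr0.
case: ifP => _; first by rewrite normr1.
by case: ifP => _; rewrite ?normrN ?normr1 ?normr0.
Qed.

Theorem theorem3p3 (R : realType) (n nt : nat) (I : nat -> nat) (tau : R)
  (A : nat -> nat -> nat -> R) :
  (2 <= n)%N ->
  I 0%N = 0%N -> I nt = n ->
  (forall k, (k < nt)%N -> (I k + 2 <= I k.+1)%N) ->
  0 < tau -> tau <= 1 / 2 ->
  beam_run tau n nt I A ->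
  growth n nt I A = tau ^- (nt - 1).
Proof.
move=> n2 I0 Int Iinc tau0 tau12 [A0 Astep].
have nt0 : (0 < nt)%N.
  case: (posnP nt) => [e|//]; move: Int; rewrite e I0 => e2; by rewrite -e2 in n2.
have Imono : forall d k, (k + d <= nt)%N -> (I k + 2 * d <= I (k + d))%N.
  elim=> [k _|d IH k kd]; first by rewrite muln0 !addn0.
  have kd' : (k + d < nt)%N by rewrite addnS in kd.
  have h1 := IH k (ltnW kd').
  have h2 := Iinc _ kd'.
  rewrite addnS; lia.
have Ilast : forall k, (k < nt)%N -> (I k + 2 <= n)%N.
  move=> k kn; have := Imono (nt - k)%N k ltac:(lia).
  rewrite subnKC ?Int; [lia | exact: ltnW].
have inv : forall k, (k < nt)%N ->
  (forall i j, (I k <= i < n)%N -> (I k <= j < n)%N -> (i < n.-1)%N ->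
      A k i j = ((i < j)%N)%:R) /\
  ((0 < k)%N -> exists c, `|c| = tau ^- k /\
      forall j, (I k <= j < n)%N -> A k n.-1 j = c).
  elim=> [_|k IH kS].
    split=> // i j /andP[_ i_n] /andP[_ jn] il.
    rewrite A0 /zielke i_n jn /=.
    have -> : (i <= n - 2)%N by lia.
    case: (i < j)%N => //=.
    by rewrite ltn_eqF.
  have [Hrows Hlast] := IH (ltnW kS).
  have [U [V [s [UU VV s0 Hd Hf]]]] := Astep k (ltnW kS).
  have hpq := Iinc k (ltnW kS).
  have hq := Ilast k.+1 kS.
  have hm : (1 < I k.+1 - I k)%N by lia.
  have HX : forall a b : 'I_(I k.+1 - I k),
      (U *m diag_mx s *m V^T) a b = ((a < b)%N)%:R.
    move=> a b; rewrite -Hd /diag_block mxE.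
    have ha := ltn_ord a; have hb := ltn_ord b.
    by rewrite Hrows ?ltn_add2l //; lia.
  have [beta [Hb Hsum]] := @BLgen R _ U V s tau hm tau0 tau12 UU VV s0 HX.
  have Hin : forall i j, (I k.+1 <= j < n)%N -> A k.+1 i j = A k i j -
      \sum_(a < I k.+1 - I k) A k i (I k + a)%N *
        ((if (a == 0 :> nat) then beta else 0) +
         (if (a == (I k.+1 - I k).-1 :> nat) then 1 else 0)).
    move=> i j hj; rewrite Hf; congr (_ - _); apply: eq_bigr => a _.
    rewrite -Hsum mulr_sumr; apply: eq_bigr => b _.
    have hb := ltn_ord b.
    have hbj : (I k + b < j)%N by lia.
    rewrite (Hrows (I k + b)%N j) ?hbj ?mulr1 //; lia.
  split.
    move=> i j /andP[qi i_n] hj il.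
    rewrite Hin // big1 ?subr0.
      by apply: Hrows => //; lia.
    move=> a _; have ha := ltn_ord a.
    have hia : (i < I k + a)%N = false by lia.
    rewrite Hrows ?hia ?mul0r //; lia.
  move=> _.
  case: (posnP k) => [k0|kp].
    subst k; rewrite I0 in hpq.
    exists beta; split; first by rewrite expr1.
    move=> j hj; rewrite Hin //.
    have -> : A 0%N n.-1 j = 0.
      rewrite A0 /zielke.
      have -> : (n.-1 < n)%N by lia.
      have -> : (j < n)%N by lia.
      have -> : (n.-1 <= n - 2)%N = false by lia.
      have -> : (j == 0)%N = false by lia.
      by rewrite andbF.
    rewrite (eq_bigr (fun a : 'I_(I 1%N - I 0%N) => if (a == 0 :> nat) then - beta else 0)).
      rewrite sum_ind ?sub0r ?opprK // I0 subn0; exact: leq_trans _ hpq.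
    move=> a _; have ha := ltn_ord a.
    have -> : (I 0 + a)%N = a by rewrite -[X in _ = X]add0n; congr addn; exact: I0.
    rewrite A0 /zielke.
    have -> : (n.-1 < n)%N by lia.
    have -> : (a < n)%N by have := leq_trans ha (leq_subr _ _); lia.
    have -> : (n.-1 <= n - 2)%N = false by lia.
    rewrite eqxx /=.
    case: eqP => [a0|]; last by rewrite mul0r.
    have -> : (a == (I 1%N - I 0%N).-1 :> nat) = false by rewrite a0; lia.
    by rewrite addr0 mulN1r.
  have [c [Hc Hcj]] := Hlast kp.
  exists (- (c * beta)); split.
    by rewrite normrN normrM Hc Hb -!exprVn exprSr.
  move=> j hj; rewrite Hin // Hcj; last by lia.
  rewrite (eq_bigr (fun a : 'I_(I k.+1 - I k) => c *
        ((if (a == 0 :> nat) then beta else 0) +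
         (if (a == (I k.+1 - I k).-1 :> nat) then 1 else 0)))); last first.
    move=> a _; have ha := ltn_ord a; by rewrite Hcj //; lia.
  rewrite -mulr_sumr big_split /= !sum_ind; [ring | lia | lia].
have t1 : forall k, 1 <= tau ^- k.
  move=> k; rewrite -exprVn exprn_ege1 // invf_ge1 //; lra.
have mn : forall k, (k < nt)%N -> maxnorm_from (I k) n (A k) = tau ^- k.
  move=> k kn; have [Hrows Hlast] := inv k kn.
  have hk := Ilast k kn.
  have bnd : forall i j, (I k <= i < n)%N -> (I k <= j < n)%N ->
      `|A k i j| <= tau ^- k.
    move=> i j hi hj.
    case: (posnP k) => [k0|kp].
      by subst k; rewrite A0 expr0 invr1 zielke_le1.
    case: (ltnP i n.-1) => il.
      rewrite Hrows //; apply: le_trans (t1 k).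
      by case: (i < j)%N; rewrite ?normr1 ?normr0.
    have ie : i = n.-1 by lia.
    have [c [Hc Hcj]] := Hlast kp.
    by rewrite ie Hcj // Hc.
  have [i0 [j0 [hi0 [hj0 e0]]]] : exists i0 j0, (I k <= i0 < n)%N /\
      (I k <= j0 < n)%N /\ `|A k i0 j0| = tau ^- k.
    case: (posnP k) => [k0|kp].
      subst k; exists 0%N, n.-1; rewrite I0; split; first by lia.
      split; first by lia.
      rewrite A0 expr0 invr1 /zielke.
      have -> : (0 < n)%N by lia.
      have -> : (n.-1 < n)%N by lia.
      have -> : (0 < n.-1)%N by lia.
      by rewrite leq0n normr1.
    have [c [Hc Hcj]] := Hlast kp.
    exists n.-1, n.-1; split; first by lia.
    split; first by lia.
    by rewrite Hcj ?Hc //; lia.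
  apply/le_anti/andP; split.
    apply: bigmax_ub => [|i hi]; first exact: le_trans (t1 k).
    apply: bigmax_ub => [|j hj]; first exact: le_trans (t1 k).
    exact: bnd.
  rewrite /maxnorm_from.
  apply: (le_trans _ (@bigmax_lb R _ _ _ _ hi0)).
  apply: (le_trans _ (@bigmax_lb R _ _ _ _ hj0)).
  by rewrite e0.
rewrite /growth.
have den : maxnorm_from 0 n (@zielke R n) = 1.
  have := mn 0%N nt0; rewrite I0 expr0 invr1 => <-.
  by apply: eq_bigr => i _; apply: eq_bigr => j _; rewrite A0.
rewrite den divr1.
rewrite (eq_bigr (fun k : 'I_nt => tau ^- k)); last by move=> k _; apply: mn.
rewrite -(big_mkord xpredT (fun k => tau ^- k)).
apply/le_anti/andP; split.
  apply: bigmax_ub => [|k hk]; first exact: le_trans (t1 _).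
  by rewrite -!exprVn expr_mono // ?invf_ge1 //; [lra | lia].
by apply: (@bigmax_lb R 0 nt (fun k => tau ^- k) (nt - 1)%N); lia.
Qed.
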